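(* Let $C'$, $S$ and $\widehat C$ be as in the context, and let $C$ be a column whose entries are a rearrangement of the elements of $S$ such that the two-column configuration $(C,C')$ is HHL. If there exist two distinct pivot entries $x,y$ of $\widehat C$ such that the transposition of $x$ and $y$ is legal with respect to $(C,C')$, then $(\widehat C,C')$ does not satisfy the Non-overlapping Condition.
   Context: A column is a finite sequence of entries listed top to bottom. $C'=(C'(1),\ldots,C'(c'))$ is a sequence of distinct positive integers and $S$ is a set of $c$ positive integers, $c\in\{c',c'+1\}$, such that with $s_1<\cdots<s_c$ the elements of $S$ and $t_1<\cdots<t_{c'}$ the entries of $C'$ sorted, $s_r\le t_r$ for $r\le c'$. The column $\widehat C$ of length $c$ is built as follows: every $x\in S\cap C'$ is placed in the row where $x$ occurs in $C'$; if $c=c'+1$, the largest element of $S\setminus C'$ is placed in row $c$; the remaining elements of $S\setminus C'$, in decreasing order, are placed in the rows occupied in $C'$ by the elements of $C'\setminus S$, in decreasing order (the $k$-th largest next to the $k$-th largest). A two-column configuration $(C,C')$ (left column $C$ of length $c$, right column $C'$) is HHL if the entries of each column are distinct, $C(j)\ne C'(r)$ whenever $r<j$, and $C(r)\le C'(r)$ for all $r\le c'$. A transposition of two entries $x,y$ of $C$ is legal with respect to $(C,C')$ if the column obtained from $C$ by swapping the positions of $x$ and $y$ forms, together with $C'$, an HHL configuration. Pivots: row $r$ is a pivot row of $(\widehat C,C')$ if either $r\le c'$ and $\widehat C(r)<C'(r)$, or $r=c'+1\le c$. If $q_1,\ldots,q_p$ are the pivot rows, the pivot entries of $\widehat C$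 are $b_j=\widehat C(q_j)$; set $d_j=C'(q_j)$ if $q_j\le c'$ and $d_j=\infty$ otherwise. $(\widehat C,C')$ satisfies the Non-overlapping Condition if $p\le1$, or if the intervals $[b_j,d_j]$ (meaning $[b_j,\infty)$ when $d_j=\infty$) are pairwise disjoint for $j\ne k$ in $[p]$. *)

(* Defs.v *)
(* Columns are sequences of natural numbers, read top to
   bottom; row r of the paper (1-based) is index r-1 here (0-based). *)
From mathcomp Require Import all_boot all_order.
Set Implicit Arguments. Unset Strict Implicit. Unset Printing Implicit Defensive.

Definition column := seq nat.

Definition admissible (C' : column) (S : seq nat) : Prop :=
  [/\ uniq C' && all (fun x => 0 < x) C', uniq S && all (fun x => 0 < x) S,
      (size S == size C') || (size S == (size C').+1) &
      forall r, r < size C' ->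
        nth 0 (sort leq S) r <= nth 0 (sort leq C') r].

Definition SmC' (S : seq nat) (C' : column) : seq nat :=
  sort geq [seq x <- S | x \notin C'].

Definition C'mS (S : seq nat) (C' : column) : seq nat :=
  sort geq [seq x <- C' | x \notin S].

(* The elements of S \ C' distributed into the rows of C' \ S: all of them
   if c = c', all but the largest if c = c' + 1. *)
Definition redistributed (S : seq nat) (C' : column) : seq nat :=
  if size S == (size C').+1 then behead (SmC' S C') else SmC' S C'.

Definition Chat (C' : column) (S : seq nat) : column :=
  [seq (if x \in S then x
        else nth 0 (redistributed S C') (index x (C'mS S C'))) | x <- C']
  ++ (if size S == (size C').+1 then [:: head 0 (SmC' S C')] else [::]).

Definition HHL (C C' : column) : Prop :=
  [/\ uniq C, uniq C',
      (forall j r, j < size C -> r < size C' -> r < j ->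
         nth 0 C j != nth 0 C' r) &
      (forall r, r < size C' -> r < size C /\ nth 0 C r <= nth 0 C' r)].

Definition swap_entries (C : column) (x y : nat) : column :=
  [seq (if z == x then y else if z == y then x else z) | z <- C].

Definition legal_transposition (C C' : column) (x y : nat) : Prop :=
  [/\ x \in C, y \in C & HHL (swap_entries C x y) C'].

Definition pivot_row (Ch C' : column) (r : nat) : bool :=
  ((r < size C') && (nth 0 Ch r < nth 0 C' r)) ||
  ((r == size C') && (size C' < size Ch)).

(* The interval [b_j, d_j] attached to pivot row q (d_j = infinity if q = c'). *)
Definition pivot_interval (Ch C' : column) (q : nat) (z : nat) : bool :=
  (nth 0 Ch q <= z) && ((size C' <= q) || (z <= nth 0 C' q)).

Definition non_overlapping (Ch C' : column) : Prop :=
  count (pivot_row Ch C') (iota 0 (size Ch)) <= 1 \/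
  (forall q1 q2, pivot_row Ch C' q1 -> pivot_row Ch C' q2 -> q1 != q2 ->
     forall z, ~~ (pivot_interval Ch C' q1 z && pivot_interval Ch C' q2 z)).

(* Main.v *)
Require Import Defs.
From mathcomp Require Import all_boot all_order.
From mathcomp Require Import zify.

Lemma count_split (T : Type) (a p : pred T) (s : seq T) :
  count a s = count (fun z => a z && p z) s + count (fun z => a z && ~~ p z) s.
Proof. elim: s => //= z s ->; case: (a z); case: (p z) => /=; lia. Qed.

Lemma arith1 (a b c d n : nat) : a + b = n.+1 -> c + d = n -> a = c -> b - 1 = d.
Proof. lia. Qed.

Lemma sub_in_count (T : eqType) (a1 a2 : pred T) (s : seq T) :
  (forall x, x \in s -> a1 x -> a2 x) -> count a1 s <= count a2 s.
Proof.
elim: s => //= z s IH h.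
have h1 : count a1 s <= count a2 s by apply: IH => x xs; apply: h; rewrite inE xs orbT.
case e: (a1 z).
- by rewrite (h z (mem_head _ _) e) /= ltnS.
- by apply: leq_trans h1 _; apply: leq_addl.
Qed.

Section Main.
Variables (C' S : seq nat).
Hypothesis adm : admissible C' S.

Let L := SmC' S C'.
Let M := C'mS S C'.
Let red := redistributed S C'.
Let big := size S == (size C').+1.

Lemma uC' : uniq C'. Proof. by case: adm => /andP[]. Qed.
Lemma uS : uniq S. Proof. by case: adm => _ /andP[]. Qed.

Lemma uM : uniq M. Proof. by rewrite /M /C'mS sort_uniq filter_uniq // uC'. Qed.
Lemma memM w : (w \in M) = (w \in C') && (w \notin S).
Proof. by rewrite /M /C'mS mem_sort mem_filter andbC. Qed.
Lemma memL w : (w \in L) = (w \in S) && (w \notin C').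
Proof. by rewrite /L /SmC' mem_sort mem_filter andbC. Qed.

Lemma perm_common : perm_eq [seq z <- S | z \in C'] [seq z <- C' | z \in S].
Proof.
apply: uniq_perm.
- by rewrite filter_uniq // uS.
- by rewrite filter_uniq // uC'.
by move=> z; rewrite !mem_filter andbC.
Qed.

Lemma count_common : count (mem C') S = count (mem S) C'.
Proof.
rewrite -!size_filter; apply: perm_size; apply: uniq_perm.
- by rewrite filter_uniq // uS.
- by rewrite filter_uniq // uC'.
by move=> z; rewrite !mem_filter andbC.
Qed.

Lemma arith2 (a b c d n : nat) : a + b = n -> c + d = n -> a = c -> b = d + 0.
Proof. lia. Qed.
Lemma arith3 (a b c d n : nat) : a + b = n.+1 -> c + d = n -> a = c -> b = d + 1.
Proof. lia. Qed.

Lemma size_LM : size L = size M + big.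
Proof.
have h1 := count_predC (mem C') S.
have h2 := count_predC (mem S) C'.
have h3 := count_common.
rewrite /L /M /C'mS /SmC' !size_sort !size_filter.
have e1 : count (fun x => x \notin C') S = count (predC (mem C')) S by [].
have e2 : count (fun x => x \notin S) C' = count (predC (mem S)) C' by [].
rewrite e1 e2; move: h1 h2 h3.
case: adm => _ _ /orP[] /eqP hs _.
- have -> : big = false by rewrite /big hs; apply/negbTE; lia.
  rewrite hs; exact: arith2.
- have -> : big = true by rewrite /big hs eqxx.
  rewrite hs; exact: arith3.
Qed.

Lemma size_red : size red = size M.
Proof.
rewrite /red /redistributed -/big -/L.
have := size_LM; case: big => /=.
- by rewrite size_behead => ->; rewrite addn1.
- by rewrite addn0.
Qed.

Lemma size_Chat : size (Chat C' S) = size C' + big.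
Proof. by rewrite /Chat size_cat size_map -/big; case: big. Qed.

Lemma nth_Chat r : r < size C' ->
  nth 0 (Chat C' S) r = if nth 0 C' r \in S then nth 0 C' r
                        else nth 0 red (index (nth 0 C' r) M).
Proof. by move=> hr; rewrite /Chat nth_cat size_map hr (nth_map 0). Qed.

Lemma nth_Chat_last : big -> nth 0 (Chat C' S) (size C') = head 0 L.
Proof. by rewrite /Chat -/big => ->; rewrite nth_cat size_map ltnn subnn. Qed.

Lemma red_sub z : z \in red -> z \in L.
Proof. by rewrite /red /redistributed; case: ifP => // _; apply: mem_behead. Qed.

Lemma pivot_in_L q : pivot_row (Chat C' S) C' q -> nth 0 (Chat C' S) q \in L.
Proof.
case/orP.
- case/andP=> hq; rewrite nth_Chat //; case: ifP; first by rewrite ltnn.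
  move=> hnS _; apply: red_sub; apply: mem_nth; rewrite size_red index_mem memM.
  by rewrite mem_nth // hnS.
- case/andP=> /eqP -> hs.
  have hb : big by move: hs; rewrite size_Chat; case: big => //=; rewrite addn0 ltnn.
  rewrite nth_Chat_last //.
  have : 0 < size L.
    by rewrite size_LM hb addn1.
  by case: L => //= a l _; rewrite inE eqxx.
Qed.

Lemma chat_count y q2 :
  (forall q1 q2, pivot_row (Chat C' S) C' q1 -> pivot_row (Chat C' S) C' q2 -> q1 != q2 ->
     forall z, ~~ (pivot_interval (Chat C' S) C' q1 z && pivot_interval (Chat C' S) C' q2 z)) ->
  pivot_row (Chat C' S) C' q2 -> nth 0 (Chat C' S) q2 = y ->
  count (fun z => z < y) S <= count (fun z => z < y) C'.
Proof.
move=> novl pq2 hy.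
have yL : y \in L by rewrite -hy pivot_in_L.
have key : forall k, k < size M -> y < nth 0 M k -> y <= nth 0 red k.
  move=> k hk hw; rewrite leqNgt; apply/negP => hlt.
  set w := nth 0 M k in hw.
  have wM : w \in M by apply: mem_nth.
  move: (wM); rewrite memM => /andP[wC wS].
  set r := index w C'.
  have hr : r < size C' by rewrite index_mem.
  have hCr : nth 0 C' r = w by rewrite nth_index.
  have hChr : nth 0 (Chat C' S) r = nth 0 red k.
    by rewrite nth_Chat // hCr (negbTE wS) /w index_uniq // uM.
  have pr : pivot_row (Chat C' S) C' r.
    by apply/orP; left; rewrite hr hChr hCr /=; apply: ltn_trans hlt hw.
  have hne : r != q2.
    apply/eqP=> e; move: hlt; by rewrite -hChr e hy ltnn.
  apply: (negP (novl _ _ pr pq2 hne y)).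
  apply/andP; split.
  - rewrite /pivot_interval hChr hCr (ltnW hlt) /=; apply/orP; right; exact: ltnW.
  - rewrite /pivot_interval hy leqnn /=.
    case/orP: pq2 => /andP[].
    + by move=> _; rewrite hy => /ltnW ->; rewrite orbT.
    + by move=> /eqP ->; rewrite leqnn.
have c1 : count (fun z => y < z) M <= count (fun z => y <= z) red.
  rewrite -(mkseq_nth 0 M) -(mkseq_nth 0 red) size_red /mkseq !count_map.
  apply: sub_in_count => k; rewrite mem_iota add0n => /andP[_ hk] /= h.
  exact: key.
have yM : y \notin M by rewrite memM; move: yL; rewrite memL => /andP[-> _]; rewrite andbF.
have c2 : count (fun z => z < y) red <= count (fun z => z < y) M.
  have h1 := count_predC (fun z => y <= z) red.
  have h2 := count_predC (fun z => y < z) M.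
  have e1 : count (predC (fun z => y <= z)) red = count (fun z => z < y) red.
    by apply: eq_count => z /=; rewrite ltnNge.
  have e2 : count (predC (fun z => y < z)) M = count (fun z => z < y) M.
    apply: eq_in_count => z zM /=; rewrite -leqNgt leq_eqVlt.
    case: eqP => // ezy; move: yM; by rewrite -ezy zM.
  rewrite e1 in h1; rewrite e2 in h2; rewrite size_red in h1.
  lia.
have c3 : count (fun z => z < y) L = count (fun z => z < y) red.
  rewrite /red /redistributed -/big -/L.
  case: big => //.
  have sL : sorted geq L by apply: sort_sorted => a b; apply: leq_total.
  move: yL sL; case: L => [|a l] //= yL sL.
  have : y <= a.
    move: yL; rewrite inE => /orP[/eqP -> //|yl].
    have tr : transitive geq by move=> u v w h1 h2; exact: leq_trans h2 h1.
    have := order_path_min tr sL.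
    by move/allP => /(_ _ yl).
  by rewrite leqNgt => /negbTE ->.
have c4 : count (fun z => z < y) S =
          count (fun z => (z < y) && (z \in C')) S + count (fun z => z < y) L.
  rewrite (@count_split _ (fun z => z < y) (mem C')); congr (_ + _).
  rewrite /L /SmC' (permP (permEl (perm_sort _ _))) count_filter.
  by apply: eq_count => z.
have c5 : count (fun z => z < y) C' =
          count (fun z => (z < y) && (z \in S)) C' + count (fun z => z < y) M.
  rewrite (@count_split _ (fun z => z < y) (mem S)); congr (_ + _).
  rewrite /M /C'mS (permP (permEl (perm_sort _ _))) count_filter.
  by apply: eq_count => z.
have c6 : count (fun z => (z < y) && (z \in C')) S = count (fun z => (z < y) && (z \in S)) C'.
  have := permP perm_common (fun z => z < y); rewrite !count_filter => h; exact: h.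
rewrite c4 c5 c6 c3 leq_add2l //.
Qed.
End Main.

Lemma main_lt (C' S C : seq nat) x y q2 :
  admissible C' S -> perm_eq C S -> HHL C C' ->
  (forall q1 q2, pivot_row (Chat C' S) C' q1 -> pivot_row (Chat C' S) C' q2 -> q1 != q2 ->
     forall z, ~~ (pivot_interval (Chat C' S) C' q1 z && pivot_interval (Chat C' S) C' q2 z)) ->
  pivot_row (Chat C' S) C' q2 -> nth 0 (Chat C' S) q2 = y -> x < y ->
  legal_transposition C C' x y -> False.
Proof.
move=> adm pCS hC novl pq2 hy xy [xC yC [_ _ _ hh2]].
have cnt := @chat_count C' S adm y q2 novl pq2 hy.
case: hC => uC _ _ hh.
pose P := [seq nth 0 C r | r <- [seq r <- iota 0 (size C') | nth 0 C' r < y]].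
have sP : size P = count (fun z => z < y) C'.
  rewrite size_map size_filter -[in RHS](mkseq_nth 0 C') /mkseq count_map //.
have uP : uniq (x :: P).
  rewrite /= map_inj_in_uniq ?filter_uniq ?iota_uniq ?andbT //.
  - apply/mapP => -[r]; rewrite mem_filter mem_iota add0n => /andP[hr /andP[_ hrs]] ex.
    have [hrC _] := hh r hrs.
    have := hh2 r hrs; rewrite /swap_entries (nth_map 0) // -ex eqxx => -[_].
    by rewrite leqNgt hr.
  - move=> r1 r2; rewrite !mem_filter !mem_iota !add0n => /andP[_ /andP[_ h1]] /andP[_ /andP[_ h2]] e.
    have [h1C _] := hh r1 h1; have [h2C _] := hh r2 h2.
    by apply/eqP; rewrite -(nth_uniq 0 h1C h2C uC) e.
have sub : {subset x :: P <= [seq z <- S | z < y]}.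
  move=> z; rewrite inE mem_filter => /orP[/eqP -> | /mapP[r]].
  - by rewrite xy -(perm_mem pCS).
  rewrite mem_filter mem_iota add0n => /andP[hr /andP[_ hrs]] ->.
  have [hrC hle] := hh r hrs.
  by rewrite (leq_ltn_trans hle hr) -(perm_mem pCS) mem_nth.
have := uniq_leq_size uP sub; rewrite size_filter /= sP => h.
move: cnt h; lia.
Qed.

Lemma piv_lt (C' S : seq nat) q : pivot_row (Chat C' S) C' q -> q < size (Chat C' S).
Proof.
have hs : size (Chat C' S) = size C' + (size S == (size C').+1).
  by rewrite /Chat size_cat size_map; case: (_ == _).
case/orP => /andP[h1 h2].
- by rewrite hs; apply: leq_trans h1 (leq_addr _ _).
- by rewrite (eqP h1).
Qed.

Lemma swap_sym C x y : x != y -> swap_entries C x y = swap_entries C y x.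
Proof.
move=> ne; apply: eq_map => z.
have ne' : y != x by rewrite eq_sym.
case: (eqVneq z x) => [->|hx]; first by rewrite ?eqxx ?(negbTE ne) ?(negbTE ne').
by [].
Qed.

Theorem lemma4p1 (C' S C : seq nat) :
  admissible C' S ->
  perm_eq C S ->
  HHL C C' ->
  (exists q1 q2,
     [/\ pivot_row (Chat C' S) C' q1, pivot_row (Chat C' S) C' q2,
         nth 0 (Chat C' S) q1 != nth 0 (Chat C' S) q2 &
         legal_transposition C C' (nth 0 (Chat C' S) q1) (nth 0 (Chat C' S) q2)]) ->
  ~ non_overlapping (Chat C' S) C'.
Proof.
move=> adm pCS hC [q1 [q2 [p1 p2 ne leg]]] [hc | hdis].
- have hq : q1 != q2 by apply: contraNneq ne => ->.
  have : 2 <= count (pivot_row (Chat C' S) C') (iota 0 (size (Chat C' S))).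
    rewrite -size_filter.
    apply: (@uniq_leq_size _ [:: q1; q2]); first by rewrite /= inE hq.
    move=> z; rewrite !inE mem_filter mem_iota add0n => /orP[] /eqP ->.
    + by rewrite p1 piv_lt.
    + by rewrite p2 piv_lt.
  by move: hc; case: count => // [[|]].
- case: (ltngtP (nth 0 (Chat C' S) q1) (nth 0 (Chat C' S) q2)) => hlt.
  + exact: (main_lt _ _ _ _ _ _ adm pCS hC hdis p2 erefl hlt leg).
  + have hdis' := hdis.
    apply: (main_lt _ _ _ _ _ _ adm pCS hC hdis' p1 erefl hlt).
    case: leg => a b c; split => //; rewrite -swap_sym //.
  + by move: ne; rewrite hlt eqxx.
Qed.
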